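(* Let $\Phi\subset K$ be nested convex polygons in $\mathbb{R}^2$. For each side $s_i$ of $\Phi$, with outward normal $\nu_i$, let $v_i$ be any vertex of $K$ maximizing $\langle\cdot,\nu_i\rangle$ over $K$, and let $C_i=\operatorname{conv}(\{v_i\}\cup s_i)$ (a possibly degenerate triangle, called the cap based on $s_i$). Then the caps $C_i$ based on all sides of $\Phi$ have pairwise disjoint interiors. *)

(* Defs.v *)
From HB Require Import structures.
From mathcomp Require Import all_boot all_order all_algebra.
From mathcomp Require Import all_classical all_reals all_analysis.
Import numFieldNormedType.Exports.
Set Implicit Arguments. Unset Strict Implicit. Unset Printing Implicit Defensive.
Import Order.TTheory GRing.Theory Num.Theory.
Local Open Scope ring_scope.
Local Open Scope classical_set_scope.

Notation pt R := (R * R)%type.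
Section Defs.
Variable R : realType.

Definition dot (u v : pt R) : R := u.1 * v.1 + u.2 * v.2.
Definition cross (u v : pt R) : R := u.1 * v.2 - u.2 * v.1.
Definition vsub (u v : pt R) : pt R := (u.1 - v.1, u.2 - v.2).

Definition hull (n : nat) (f : 'I_n -> pt R) : set (pt R) :=
  [set x | exists w : 'I_n -> R, (forall i, 0 <= w i) /\ \sum_(i < n) w i = 1 /\
     x.1 = \sum_(i < n) w i * (f i).1 /\ x.2 = \sum_(i < n) w i * (f i).2].

Definition tri (a b c : pt R) : set (pt R) :=
  [set x | exists al be ga : R, 0 <= al /\ 0 <= be /\ 0 <= ga /\ al + be + ga = 1 /\
     x.1 = al * a.1 + be * b.1 + ga * c.1 /\ x.2 = al * a.2 + be * b.2 + ga * c.2].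

(* p : 'I_n -> pt lists the vertices of a (non-degenerate) convex polygon in
   counterclockwise order: every vertex other than the endpoints of side
   [p i, p (i+1)] lies strictly to the left of that side. *)
Definition ccw_convex_polygon (n : nat) (p : 'I_n -> pt R) : Prop :=
  (3 <= n)%N /\
  forall i j : 'I_n, j != i -> j != ordS i ->
    0 < cross (vsub (p (ordS i)) (p i)) (vsub (p j) (p i)).

(* outward unit-free normal to the side [p i, p (i+1)] of a ccw polygon *)
Definition out_normal (n : nat) (p : 'I_n -> pt R) (i : 'I_n) : pt R :=
  let d := vsub (p (ordS i)) (p i) in (d.2, - d.1).

Definition cap (n : nat) (p : 'I_n -> pt R) (i : 'I_n) (v : pt R) : set (pt R) :=
  tri v (p i) (p (ordS i)).
End Defs.

(* Main.v *)
Require Import Defs.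
From HB Require Import structures.
From mathcomp Require Import all_boot all_order all_algebra.
From mathcomp Require Import all_classical all_reals all_analysis.
From mathcomp Require Import ring lra zify.
Import numFieldNormedType.Exports.
Import Order.TTheory GRing.Theory Num.Theory.
Local Open Scope ring_scope.
Local Open Scope classical_set_scope.

Lemma ordS_neq n (i : 'I_n) : (2 <= n)%N -> ordS i != i.
Proof.
move=> n2; apply/eqP => /(congr1 val) /=; have := ltn_ord i.
case: (ltngtP i.+1 n) => h.
- rewrite (modn_small h); lia.
- lia.
- rewrite h modnn; lia.
Qed.

Lemma ordSS_neq n (i : 'I_n) : (3 <= n)%N -> ordS (ordS i) != i.
Proof.
move=> n3; apply/eqP => /(congr1 val) /=; have := ltn_ord i.
case: (ltngtP i.+1 n) => h.
- rewrite (modn_small h); case: (ltngtP i.+2 n) => h2.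
  + rewrite (modn_small h2); lia.
  + lia.
  + rewrite h2 modnn; lia.
- lia.
- rewrite h modnn modn_small; lia.
Qed.

Lemma flat_not_interior (R : realType) (S : set (R * R)) (x : R * R) (a b k : R) :
  (a != 0) || (b != 0) -> (forall y, S y -> a * y.1 + b * y.2 = k) -> ~ interior S x.
Proof.
move=> ab hS /nbhs_ballP [e /= e0 he].
have hh : forall u, `|u - (u + e/2)| < e.
  move=> u; have -> : u - (u + e/2) = - (e/2) by ring.
  rewrite normrN ger0_norm; last by rewrite divr_ge0 ?ltW.
  lra.
have hz : forall u : R, `|u - u| < e by move=> u; rewrite subrr normr0.
have h1 : S (x.1 + e/2, x.2) by apply: he; split => /=; rewrite -?ball_normE /ball_ /=.
have h2 : S (x.1, x.2 + e/2) by apply: he; split => /=; rewrite -?ball_normE /ball_ /=.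
have h0 : S (x.1, x.2) by apply: he; split => /=; rewrite -?ball_normE /ball_ /=.
move: (hS _ h0) (hS _ h1) (hS _ h2) => /= E0 E1 E2.
have ea : a * (e/2) = 0 by rewrite -E0 in E1; lra.
have eb : b * (e/2) = 0 by rewrite -E0 in E2; lra.
have e2 : e / 2 != 0 by rewrite gt_eqF // divr_gt0.
have {}ea : a = 0 by apply: (mulIf e2); rewrite mul0r.
have {}eb : b = 0 by apply: (mulIf e2); rewrite mul0r.
by move: ab; rewrite ea eb eqxx.
Qed.

Lemma hull_pt (R : realType) n (f : 'I_n -> pt R) k : hull f (f k).
Proof.
exists (fun l => (l == k)%:R); split; first by move=> l; rewrite ler0n.
have E : forall F : 'I_n -> R, \sum_(l < n) (l == k)%:R * F l = F k.
  move=> F; rewrite (bigD1 k) //= eqxx mul1r big1 ?addr0 //.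
  by move=> l /negbTE ->; rewrite mul0r.
split; last by rewrite !E.
by have := E (fun _ => 1); under eq_bigr do rewrite mulr1.
Qed.

Arguments hull_pt {R n} f k.

Lemma g_tri (R : realType) (v a b x nu : pt R) (h al be ga : R) :
  al + be + ga = 1 -> x.1 = al * v.1 + be * a.1 + ga * b.1 ->
  x.2 = al * v.2 + be * a.2 + ga * b.2 ->
  dot x nu - h = al * (dot v nu - h) + be * (dot a nu - h) + ga * (dot b nu - h).
Proof.
move=> s e1 e2; have e : ga = 1 - al - be by lra.
by rewrite /dot e1 e2 e; ring.
Qed.

Arguments g_tri {R v a b x nu h al be ga}.

Lemma core (R : realType) (al be ga al' be' ga' M M' gv' ga1 gb1 hv ha hb : R) :
  0 <= al -> 0 <= be -> 0 <= ga -> 0 <= al' -> 0 <= be' -> 0 <= ga' ->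
  0 < M -> 0 < M' -> gv' <= M -> ga1 <= 0 -> gb1 <= 0 -> hv <= M' -> ha <= 0 -> hb <= 0 ->
  al * M = al' * gv' + be' * ga1 + ga' * gb1 ->
  al' * M' = al * hv + be * ha + ga * hb ->
  [/\ al = al', be' * ga1 = 0, ga' * gb1 = 0, be * ha = 0 & ga * hb = 0].
Proof.
move=> *.
have t1 : al' * gv' <= al' * M by rewrite ler_wpM2l.
have t2 : be' * ga1 <= 0 by rewrite mulr_ge0_le0.
have t3 : ga' * gb1 <= 0 by rewrite mulr_ge0_le0.
have t4 : al * hv <= al * M' by rewrite ler_wpM2l.
have t5 : be * ha <= 0 by rewrite mulr_ge0_le0.
have t6 : ga * hb <= 0 by rewrite mulr_ge0_le0.
have l1 : al <= al'.
  by rewrite -(ler_pM2r (_ : 0 < M)) //; lra.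
have l2 : al' <= al.
  by rewrite -(ler_pM2r (_ : 0 < M')) //; lra.
have e : al = al' by apply/eqP; rewrite eq_le l1 l2.
have u1 : al' * M <= al' * M by [].
subst al'.
split => //; lra.
Qed.

Arguments core {R al be ga al' be' ga' M M' gv' ga1 gb1 hv ha hb}.
Arguments flat_not_interior {R S x a b k}.

Section Geo.
Variables (R : realType) (n m : nat) (p : 'I_n -> pt R) (q : 'I_m -> pt R)
  (c : 'I_n -> 'I_m).
Hypotheses (hp : ccw_convex_polygon p) (hsub : hull p `<=` hull q)
  (hmax : forall i : 'I_n, forall x, hull q x ->
     dot x (out_normal p i) <= dot (q (c i)) (out_normal p i)).

Definition gg i (y : pt R) := dot y (out_normal p i) - dot (p i) (out_normal p i).
Definition MM i := gg i (q (c i)).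

Lemma g_i i : gg i (p i) = 0.
Proof. by rewrite /gg subrr. Qed.

Lemma g_iS i : gg i (p (ordS i)) = 0.
Proof. by rewrite /gg /dot /out_normal /vsub /=; ring. Qed.

Lemma g_neg i k : k != i -> k != ordS i -> gg i (p k) < 0.
Proof.
move=> h1 h2; have := hp.2 i k h1 h2.
rewrite /gg /dot /cross /out_normal /vsub /= => H.
lra.
Qed.

Lemma g_p_le i k : gg i (p k) <= 0.
Proof.
case: (eqVneq k i) => [->|h1]; first by rewrite g_i.
case: (eqVneq k (ordS i)) => [->|h2]; first by rewrite g_iS.
exact/ltW/g_neg.
Qed.

Lemma g_le i y : hull q y -> gg i y <= MM i.
Proof. by move=> hy; rewrite /MM /gg lerD2r hmax. Qed.

Lemma M_ge0 i : 0 <= MM i.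
Proof. by have := g_le i _ (hsub _ (hull_pt p i)); rewrite g_i. Qed.

Lemma n3 : (3 <= n)%N. Proof. exact: hp.1. Qed.

Lemma nu_nz i : ((out_normal p i).1 != 0) || ((out_normal p i).2 != 0).
Proof.
have h1 : ordS (ordS i) != i by apply: ordSS_neq; exact: n3.
have h2 : ordS (ordS i) != ordS i.
  by apply: ordS_neq; apply: leq_trans n3.
have := g_neg _ _ h1 h2.
apply: contraTT => /norP [/negPn/eqP a /negPn/eqP b].
by rewrite /gg /dot a b !mulr0 !addr0 subrr ltxx.
Qed.

Lemma g_cap i (v y : pt R) al be ga : al + be + ga = 1 ->
  y.1 = al * v.1 + be * (p i).1 + ga * (p (ordS i)).1 ->
  y.2 = al * v.2 + be * (p i).2 + ga * (p (ordS i)).2 ->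
  forall k, gg k y = al * gg k v + be * gg k (p i) + ga * gg k (p (ordS i)).
Proof. by move=> s e1 e2 k; apply: g_tri. Qed.

Lemma both i j y al be ga al' be' ga' : 0 < MM i -> 0 < MM j ->
  0 <= al -> 0 <= be -> 0 <= ga -> al + be + ga = 1 ->
  y.1 = al * (q (c i)).1 + be * (p i).1 + ga * (p (ordS i)).1 ->
  y.2 = al * (q (c i)).2 + be * (p i).2 + ga * (p (ordS i)).2 ->
  0 <= al' -> 0 <= be' -> 0 <= ga' -> al' + be' + ga' = 1 ->
  y.1 = al' * (q (c j)).1 + be' * (p j).1 + ga' * (p (ordS j)).1 ->
  y.2 = al' * (q (c j)).2 + be' * (p j).2 + ga' * (p (ordS j)).2 ->
  [/\ al = al', be' * gg i (p j) = 0, ga' * gg i (p (ordS j)) = 0,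
      be * gg j (p i) = 0 & ga * gg j (p (ordS i)) = 0].
Proof.
move=> Mi Mj a0 b0 c0 s e1 e2 a0' b0' c0' s' e1' e2'.
have E1 := g_cap _ _ _ _ _ _ s e1 e2 i.
have E1' := g_cap _ _ _ _ _ _ s' e1' e2' i.
have E2 := g_cap _ _ _ _ _ _ s e1 e2 j.
have E2' := g_cap _ _ _ _ _ _ s' e1' e2' j.
rewrite g_i g_iS !mulr0 !addr0 in E1.
rewrite g_i g_iS !mulr0 !addr0 in E2'.
apply: (core a0 b0 c0 a0' b0' c0' Mi Mj).
- exact: g_le _ _ (hull_pt q (c j)).
- exact: g_p_le.
- exact: g_p_le.
- exact: g_le _ _ (hull_pt q (c i)).
- exact: g_p_le.
- exact: g_p_le.
- by rewrite /MM -E1 E1'.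
- by rewrite /MM -E2' E2.
Qed.

Lemma prod0 (a b : R) : a * b = 0 -> b < 0 -> a = 0.
Proof. by move/eqP; rewrite mulf_eq0 => /orP [/eqP //|/eqP ->]; rewrite ltxx. Qed.

Definition flatS (S : set (pt R)) := exists a b k : R,
  ((a != 0) || (b != 0)) /\ forall y, S y -> a * y.1 + b * y.2 = k.

Lemma flat_M0 i (S : set (pt R)) : MM i = 0 -> S `<=` cap p i (q (c i)) -> flatS S.
Proof.
move=> M0 sub.
exists (out_normal p i).1, (out_normal p i).2, (dot (p i) (out_normal p i)).
split; first exact: nu_nz.
move=> y /sub [al [be [ga [_ [_ [_ [s [e1 e2]]]]]]]].
have := g_cap _ _ _ _ _ _ s e1 e2 i; rewrite g_i g_iS -/(MM i) M0 !mulr0 !addr0.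
rewrite /gg /dot => H; lra.
Qed.

Lemma flat_adj i : 0 < MM i -> 0 < MM (ordS i) ->
  flatS (cap p i (q (c i)) `&` cap p (ordS i) (q (c (ordS i)))).
Proof.
move=> Mi Mj.
set v := q (c i); set w := vsub (p (ordS i)) v.
exists w.2, (- w.1), (w.2 * v.1 + - w.1 * v.2); split.
  rewrite -negb_and; apply/negP => /andP [/eqP a /eqP b].
  move: Mi; rewrite /MM -/v.
  have -> : gg i v = gg i (p (ordS i)).
    rewrite /gg /dot; move: a b; rewrite /w /vsub /= => a /eqP.
    rewrite oppr_eq0 => /eqP b.
    have -> : v.1 = (p (ordS i)).1 by lra.
    have -> : v.2 = (p (ordS i)).2 by lra.
    by [].
  by rewrite g_iS ltxx.
move=> y [[al [be [ga [a0 [b0 [c0 [s [e1 e2]]]]]]]]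
          [al' [be' [ga' [a0' [b0' [c0' [s' [e1' e2']]]]]]]]].
have [_ _ _ hb _] := both _ _ _ _ _ _ _ _ _ Mi Mj a0 b0 c0 s e1 e2 a0' b0' c0' s' e1' e2'.
have ne1 : i != ordS i by rewrite eq_sym ordS_neq //; apply: leq_trans n3.
have ne2 : i != ordS (ordS i) by rewrite eq_sym ordSS_neq //; exact: n3.
have be0 := prod0 _ _ hb (g_neg _ _ ne1 ne2).
rewrite e1 e2 /w /vsub /= be0.
have -> : al = 1 - ga by lra.
ring.
Qed.

Lemma flat_nonadj i j : i != j -> j != ordS i -> i != ordS j -> 0 < MM i -> 0 < MM j ->
  flatS (cap p i (q (c i)) `&` cap p j (q (c j))).
Proof.
move=> ij ji1 ij1 Mi Mj.
exists 1, 0, (q (c i)).1; split; first by rewrite oner_eq0.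
move=> y [[al [be [ga [a0 [b0 [c0 [s [e1 e2]]]]]]]]
          [al' [be' [ga' [a0' [b0' [c0' [s' [e1' e2']]]]]]]]].
have [eal hb' hc' _ _] := both _ _ _ _ _ _ _ _ _ Mi Mj a0 b0 c0 s e1 e2 a0' b0' c0' s' e1' e2'.
have ne1 : j != i by rewrite eq_sym.
have ne2 : ordS j != i by rewrite eq_sym.
have ne3 : ordS j != ordS i by apply: contra ij => /eqP /ordS_inj ->.
have be0 := prod0 _ _ hb' (g_neg _ _ ne1 ji1).
have ga0 := prod0 _ _ hc' (g_neg _ _ ne2 ne3).
have be00 : be = 0 by lra.
have ga00 : ga = 0 by lra.
have al1 : al = 1 by lra.
by rewrite e1 be00 ga00 al1; ring.
Qed.

Lemma main_sec i j : i != j ->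
    interior (cap p i (q (c i))) `&` interior (cap p j (q (c j))) = set0.
Proof.
move=> ij.
have F : flatS (cap p i (q (c i)) `&` cap p j (q (c j))).
  have := M_ge0 i; rewrite le_eqVlt => /orP [/eqP Mi|Mi].
    by apply: (flat_M0 i _ (esym Mi)) => y [].
  have := M_ge0 j; rewrite le_eqVlt => /orP [/eqP Mj|Mj].
    by apply: (flat_M0 j _ (esym Mj)) => y [].
  case: (eqVneq j (ordS i)) => [ej|ji1].
    by rewrite ej; apply: flat_adj => //; rewrite -ej.
  case: (eqVneq i (ordS j)) => [ei|ij1].
    have [a [b [k [ab hk]]]] : flatS (cap p j (q (c j)) `&` cap p (ordS j) (q (c (ordS j)))).
      by apply: flat_adj => //; rewrite -ei.
    exists a, b, k; split => // y [h1 h2]; apply: hk; split => //; by rewrite -ei.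
  exact: flat_nonadj.
rewrite -interiorI; apply/seteqP; split => // y hy.
have [a [b [k [ab hk]]]] := F.
exact: (flat_not_interior ab hk hy).
Qed.

End Geo.

Theorem lemma7p1 (R : realType) (n m : nat) (p : 'I_n -> pt R) (q : 'I_m -> pt R)
    (c : 'I_n -> 'I_m) :
  ccw_convex_polygon p -> ccw_convex_polygon q ->
  hull p `<=` hull q ->
  (forall i : 'I_n, forall x, hull q x ->
     dot x (out_normal p i) <= dot (q (c i)) (out_normal p i)) ->
  forall i j : 'I_n, i != j ->
    interior (cap p i (q (c i))) `&` interior (cap p j (q (c j))) = set0.
Proof.
move=> hp _ hsub hmax i j ij.
exact: (main_sec R n m p q c hp hsub hmax i j ij).
Qed.
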